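(* Let $F \subseteq \mathbb{H}$ intersect every wedge in $\mathbb{H}$. Then there is $u \in \mathbb{S}^+$ such that $T_u(F)$ is dense in $\mathbb{R}$.
   Context: $\mathbb{H} = \{(x,y) \in \mathbb{R}^2 : y > 0\}$, $\mathbb{S}$ is the unit circle in $\mathbb{R}^2$, and $\mathbb{S}^+ = \mathbb{S} \cap \mathbb{H}$. For $u = (u_1,u_2) \in \mathbb{S}$, $T_u : \mathbb{R}^2 \to \mathbb{R}$ is the orthogonal projection parallel to $u$, i.e. $T_u(x) = \langle x,(u_2,-u_1)\rangle$, so $T_u(x) = T_u(y)$ iff $x-y \in \mathbb{R}u$. A wedge in $\mathbb{H}$ is a set of the form $\{tv : t > s, v \in \mathbb{S}, \|v-u\| < \varepsilon\}$ for some $u \in \mathbb{S}^+$ and $s,\varepsilon > 0$, which is contained in $\mathbb{H}$. *)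

(* Defs.v *)
From Stdlib Require Import Reals.
Open Scope R_scope.

Definition pt := (R * R)%type.

Definition inH (p : pt) : Prop := 0 < snd p.

Definition inS (u : pt) : Prop := fst u ^ 2 + snd u ^ 2 = 1.
Definition inSplus (u : pt) : Prop := inS u /\ inH u.

Definition dist2 (p q : pt) : R :=
  sqrt ((fst p - fst q) ^ 2 + (snd p - snd q) ^ 2).

Definition T (u x : pt) : R := fst x * snd u + snd x * (- fst u).

Definition wedge_set (u : pt) (s eps : R) (p : pt) : Prop :=
  exists t v, t > s /\ inS v /\ dist2 v u < eps /\
              p = (t * fst v, t * snd v).

Definition is_wedge_in_H (W : pt -> Prop) : Prop :=
  exists u s eps, inSplus u /\ 0 < s /\ 0 < eps /\
    (forall p, W p <-> wedge_set u s eps p) /\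
    (forall p, W p -> inH p).

Definition dense_in_R (A : R -> Prop) : Prop :=
  forall x e, 0 < e -> exists y, A y /\ Rabs (y - x) < e.

(* Main.v *)
Require Import Defs.
From Stdlib Require Import Reals Lra Lia ZArith Cantor IndefiniteDescription.
Open Scope R_scope.

Lemma abs_le_sqrt (a b : R) : Rabs a <= sqrt (a ^ 2 + b ^ 2).
Proof.
  rewrite <- sqrt_Rsqr_abs. apply sqrt_le_1_alt. unfold Rsqr. nra.
Qed.

Lemma dist_bounds (v u : pt) (eps : R) : dist2 v u < eps ->
  Rabs (fst v - fst u) < eps /\ Rabs (snd v - snd u) < eps.
Proof.
  unfold dist2; intros H; split.
  - eapply Rle_lt_trans; [apply abs_le_sqrt|exact H].
  - eapply Rle_lt_trans; [|exact H].
    rewrite Rplus_comm. apply abs_le_sqrt.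
Qed.

Lemma ratio_bound (v1 v2 u1 u2 m eps w : R) :
  0 < u2 -> u2 <= 1 -> Rabs m * u2 <= 1 -> u1 = m * u2 ->
  v2 > u2 / 2 -> Rabs (v1 - u1) < eps -> Rabs (v2 - u2) < eps ->
  eps * 8 <= w * u2 ^ 2 ->
  Rabs (v1 / v2 - m) < w.
Proof.
  intros Hu2 Hu21 Hm Hu1 Hv2 H1 H2 He.
  assert (Hv2p : 0 < v2) by lra.
  assert (E : v1 / v2 - m = (v1 - m * v2) / v2) by (field; lra).
  rewrite E. unfold Rdiv. rewrite Rabs_mult, Rabs_inv, (Rabs_right v2) by lra.
  assert (HX : Rabs (v1 - m * v2) <= Rabs (v1 - u1) + Rabs m * Rabs (v2 - u2)).
  { replace (v1 - m * v2) with ((v1 - u1) + (- m) * (v2 - u2)) by (rewrite Hu1; ring).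
    eapply Rle_trans; [apply Rabs_triang|]. rewrite Rabs_mult, Rabs_Ropp. lra. }
  assert (Hma : 0 <= Rabs m) by apply Rabs_pos.
  assert (HX2 : Rabs (v1 - m * v2) < eps * (1 + Rabs m)).
  { assert (Rabs m * Rabs (v2 - u2) <= Rabs m * eps) by (apply Rmult_le_compat_l; lra). nra. }
  assert (Hep : 0 < eps) by (pose proof (Rabs_pos (v1 - u1)); lra).
  assert (eps * (1 + Rabs m) * u2 <= 2 * eps) by nra.
  assert (eps * (1 + Rabs m) <= w * u2 / 4).
  { apply Rmult_le_reg_r with u2; [lra|]. nra. }
  apply Rmult_lt_reg_r with v2; [lra|].
  rewrite Rmult_assoc, Rinv_l by lra. nra.
Qed.

Definition Hyp (F : pt -> Prop) :=
  (forall p, F p -> inH p) /\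
  (forall W : pt -> Prop, is_wedge_in_H W -> exists p, F p /\ W p).

Lemma unit_param (m : R) :
  let N := sqrt (1 + m ^ 2) in
  0 < N /\ 1 <= N /\ Rabs m <= N /\ N * N = 1 + m ^ 2 /\
  inSplus (m / N, 1 / N).
Proof.
  intros N.
  assert (HN2 : N * N = 1 + m ^ 2) by (apply sqrt_sqrt; nra).
  assert (HN0 : 0 <= N) by apply sqrt_pos.
  assert (HN1 : 1 <= N) by nra.
  repeat split; try lra.
  - rewrite <- sqrt_Rsqr_abs. apply sqrt_le_1_alt. unfold Rsqr. nra.
  - unfold inS; cbn [fst snd]. replace ((m / N) ^ 2 + (1 / N) ^ 2) with ((1 + m ^ 2) / (N * N)) by (field; lra). rewrite <- HN2. field. lra.
  - unfold inH; simpl. apply Rdiv_lt_0_compat; lra.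
Qed.

Lemma wedge_pt (F : pt -> Prop) : Hyp F ->
  forall m w B, 0 < w -> exists x, F x /\ 0 < snd x /\
    Rabs (fst x / snd x - m) < w /\ B < snd x.
Proof.
  intros [HFH HW] m w B Hw.
  destruct (unit_param m) as (HN0 & HN1 & HNm & HN2 & HS).
  set (N := sqrt (1 + m ^ 2)) in *.
  set (u2 := 1 / N).
  assert (Hu2 : 0 < u2) by (unfold u2; apply Rdiv_lt_0_compat; lra).
  assert (Hu21 : u2 <= 1).
  { unfold u2. apply Rmult_le_reg_r with N; [lra|]. field_simplify; lra. }
  assert (Hmu : Rabs m * u2 <= 1).
  { unfold u2. apply Rmult_le_reg_r with N; [lra|]. field_simplify; lra. }
  set (eps := Rmin (u2 / 2) (w * u2 ^ 2 / 8)).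
  assert (He1 : eps <= u2 / 2) by apply Rmin_l.
  assert (He2 : eps <= w * u2 ^ 2 / 8) by apply Rmin_r.
  assert (He0 : 0 < eps).
  { unfold eps. apply Rmin_glb_lt; [lra|]. apply Rdiv_lt_0_compat; [|lra].
    apply Rmult_lt_0_compat; [lra| apply pow_lt; lra]. }
  set (s := 2 * (Rabs B + 1) / u2).
  assert (Hs0 : 0 < s).
  { unfold s. apply Rdiv_lt_0_compat; [|lra]. pose proof (Rabs_pos B); lra. }
  assert (Hsu : s * u2 = 2 * (Rabs B + 1)) by (unfold s; field; lra).
  assert (Hpt : forall p, wedge_set (m / N, 1 / N) s eps p ->
     0 < snd p /\ Rabs (fst p / snd p - m) < w /\ B < snd p).
  { intros p (t & v & Ht & Hv & Hd & ->). simpl.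
    destruct (dist_bounds _ _ _ Hd) as [D1 D2]. simpl in D1, D2.
    fold u2 in D2.
    assert (Hv2 : snd v > u2 / 2).
    { apply Rabs_def2 in D2. lra. }
    assert (Ht2 : t * snd v > s * u2 / 2).
    { apply Rle_lt_trans with (s * snd v); [nra|apply Rmult_lt_compat_r; lra]. }
    pose proof (Rle_abs B).
    split; [nra|split].
    - replace (t * fst v / (t * snd v)) with (fst v / snd v) by (field; lra).
      apply (ratio_bound (fst v) (snd v) (m / N) u2 m eps w); try lra.
      unfold u2; field; lra.
    - lra. }
  destruct (HW (wedge_set (m / N, 1 / N) s eps)) as (x & Fx & Wx).
  { exists (m / N, 1 / N), s, eps. repeat split; try lra; try apply HS; try tauto.
    intros p Hp. unfold inH. apply (Hpt p Hp). }
  exists x. split; [exact Fx|]. apply Hpt, Wx.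
Qed.

Lemma core_step (F : pt -> Prop) : Hyp F -> forall l r q d, l < r -> 0 < d ->
  exists l' r', l < l' /\ l' < r' /\ r' < r /\
   forall b, l' <= b <= r' -> exists x, F x /\ Rabs (fst x - b * snd x - q) < d.
Proof.
  intros HF l r q d Hlr Hd.
  set (m := (l + r) / 2). set (w := (r - l) / 4).
  assert (Hw : 0 < w) by (unfold w; lra).
  destruct (wedge_pt F HF m w (2 * Rabs q / w + 1) Hw) as (x & Fx & Hx2 & Hxr & HB).
  set (x1 := fst x) in *. set (x2 := snd x) in *.
  set (a := (x1 - q) / x2).
  assert (Hqa : Rabs q / x2 < w / 2).
  { pose proof (Rabs_pos q).
    assert (2 * Rabs q / w < x2) by lra.
    apply Rmult_lt_reg_r with x2; [lra|].
    unfold Rdiv at 1. rewrite Rmult_assoc, Rinv_l by lra.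
    assert (2 * Rabs q < w * x2).
    { apply Rmult_lt_reg_r with (/ w). apply Rinv_0_lt_compat; lra.
      replace (w * x2 * / w) with x2 by (field; lra). exact H0. }
    nra. }
  assert (Ham : Rabs (a - m) < 3 * w / 2).
  { replace (a - m) with ((x1 / x2 - m) + (- q / x2)) by (unfold a; field; lra).
    eapply Rle_lt_trans; [apply Rabs_triang|].
    unfold Rdiv at 2. rewrite Rabs_mult, Rabs_Ropp, Rabs_inv, (Rabs_right x2) by lra.
    unfold Rdiv in Hqa. lra. }
  set (eta := Rmin (d / (2 * x2)) (w / 4)).
  assert (He1 : eta <= d / (2 * x2)) by apply Rmin_l.
  assert (He2 : eta <= w / 4) by apply Rmin_r.
  assert (He0 : 0 < eta).
  { apply Rmin_glb_lt; [apply Rdiv_lt_0_compat; lra | lra]. }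
  apply Rabs_def2 in Ham.
  exists (a - eta), (a + eta). split; [unfold m, w in *; lra|].
  split; [lra|]. split; [unfold m, w in *; lra|].
  intros b Hb.
  exists x. split; [exact Fx|]. change (Rabs (x1 - b * x2 - q) < d).
  replace (x1 - b * x2 - q) with (x2 * (a - b)) by (unfold a; field; lra).
  rewrite Rabs_mult, (Rabs_right x2) by lra.
  assert (Rabs (a - b) <= eta) by (apply Rabs_le; lra).
  assert (x2 * eta <= d / 2).
  { apply Rmult_le_reg_r with (/ x2). apply Rinv_0_lt_compat; lra.
    replace (x2 * eta * / x2) with eta by (field; lra).
    replace (d / 2 * / x2) with (d / (2 * x2)) by (field; lra). lra. }
  assert (x2 * Rabs (a - b) <= x2 * eta) by (apply Rmult_le_compat_l; lra).
  lra.
Qed.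

Definition tq (n : nat) : R :=
  let '(p, k) := Cantor.of_nat n in let '(i, j) := Cantor.of_nat p in
  (INR i - INR j) / (INR k + 1).
Definition td (n : nat) : R := 1 / (INR (snd (Cantor.of_nat n)) + 1).

Definition Good (F : pt -> Prop) (n : nat) (b : R) :=
  exists x, F x /\ Rabs (fst x - b * snd x - tq n) < td n.

Lemma td_pos n : 0 < td n.
Proof. unfold td. apply Rdiv_lt_0_compat; [lra|]. pose proof (pos_INR (snd (Cantor.of_nat n))); lra. Qed.

Lemma good_dense (F : pt -> Prop) (b : R) : (forall n, Good F n b) ->
  forall z e, 0 < e -> exists x, F x /\ Rabs (fst x - b * snd x - z) < e.
Proof.
  intros HG z e He.
  destruct (archimed (2 / e)) as [A1 _].
  assert (Hup : (0 <= up (2 / e))%Z).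
  { apply le_IZR. assert (0 < 2 / e) by (apply Rdiv_lt_0_compat; lra). lra. }
  set (k := Z.to_nat (up (2 / e))).
  assert (Hk : INR k > 2 / e).
  { unfold k. rewrite INR_IZR_INZ, Z2Nat.id by exact Hup. exact A1. }
  assert (HK : 0 < INR k + 1) by (pose proof (pos_INR k); lra).
  set (c := z * (INR k + 1)).
  destruct (archimed c) as [B1 B2].
  set (M := up c) in *.
  assert (HM : exists i j, IZR M = INR i - INR j).
  { destruct (Z_le_gt_dec 0 M).
    - exists (Z.to_nat M), O. rewrite INR_IZR_INZ, Z2Nat.id by lia. simpl; lra.
    - exists O, (Z.to_nat (- M)). rewrite (INR_IZR_INZ (Z.to_nat (- M))), Z2Nat.id by lia.
      rewrite opp_IZR. simpl; lra. }
  destruct HM as (i & j & HM).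
  set (n := Cantor.to_nat (Cantor.to_nat (i, j), k)).
  destruct (HG n) as (x & Fx & Hx).
  assert (Htq : tq n = (INR i - INR j) / (INR k + 1)).
  { unfold tq, n. rewrite !Cantor.cancel_of_to. reflexivity. }
  assert (Htd : td n = 1 / (INR k + 1)).
  { unfold td, n. rewrite !Cantor.cancel_of_to. reflexivity. }
  rewrite Htq, Htd in Hx.
  exists x. split; [exact Fx|].
  assert (Hq : Rabs ((INR i - INR j) / (INR k + 1) - z) <= 1 / (INR k + 1)).
  { rewrite <- HM.
    replace (IZR M / (INR k + 1) - z) with ((IZR M - c) / (INR k + 1)) by (unfold c; field; lra).
    unfold Rdiv. rewrite Rabs_mult, Rabs_inv, (Rabs_right (INR k + 1)) by lra.
    apply Rmult_le_compat_r. apply Rlt_le, Rinv_0_lt_compat; lra.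
    rewrite Rabs_right; lra. }
  assert (Hs : 1 / (INR k + 1) < e / 2).
  { apply Rmult_lt_reg_r with (INR k + 1); [lra|].
    replace (1 / (INR k + 1) * (INR k + 1)) with 1 by (field; lra).
    assert (2 / e * e = 2) by (field; lra).
    assert (e * INR k > 2) by (assert (e * INR k > e * (2/e)) by (apply Rmult_lt_compat_l; lra); lra).
    nra. }
  replace (fst x - b * snd x - z) with ((fst x - b * snd x - (INR i - INR j) / (INR k + 1)) + ((INR i - INR j) / (INR k + 1) - z)) by ring.
  eapply Rle_lt_trans; [apply Rabs_triang|]. lra.
Qed.

Lemma exists_good (F : pt -> Prop) : Hyp F -> exists b, forall n, Good F n b.
Proof.
  intros HF.
  assert (Hst : forall (n : nat) (p : R * R), exists p' : R * R,
    fst p < snd p -> fst p < fst p' /\ fst p' < snd p' /\ snd p' < snd p /\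
      forall b, fst p' <= b <= snd p' -> Good F n b).
  { intros n [l r]. destruct (Rlt_dec l r) as [Hlr|Hlr].
    - destruct (core_step F HF l r (tq n) (td n) Hlr (td_pos n)) as (l' & r' & H).
      exists (l', r'). intros _. exact H.
    - exists (l, r). simpl; intros; contradiction. }
  pose (step := fun n p => proj1_sig (constructive_indefinite_description _ (Hst n p))).
  assert (Hstep : forall n p, fst p < snd p -> fst p < fst (step n p) /\ fst (step n p) < snd (step n p) /\ snd (step n p) < snd p /\
      forall b, fst (step n p) <= b <= snd (step n p) -> Good F n b).
  { intros n p. unfold step. destruct (constructive_indefinite_description _ (Hst n p)) as [p' Hp']. exact Hp'. }
  pose (I := fix I (n : nat) : R * R := match n with O => (0, 1) | S k => step k (I k) end).
  assert (HI : forall n, fst (I n) < snd (I n)).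
  { induction n as [|n IH]; simpl; [lra|]. apply (Hstep n (I n) IH). }
  assert (HIS : forall n, fst (I n) <= fst (I (S n)) /\ snd (I (S n)) <= snd (I n)).
  { intros n. simpl. destruct (Hstep n (I n) (HI n)) as (A & B & C & _). lra. }
  assert (Hmono : forall n m, (n <= m)%nat -> fst (I n) <= fst (I m) /\ snd (I m) <= snd (I n)).
  { intros n m Hnm. induction Hnm; [lra|]. destruct (HIS m). lra. }
  assert (Hlr : forall n m, fst (I m) <= snd (I n)).
  { intros n m. destruct (Hmono n (Nat.max n m) (Nat.le_max_l _ _)).
    destruct (Hmono m (Nat.max n m) (Nat.le_max_r _ _)). pose proof (HI (Nat.max n m)). lra. }
  destruct (completeness (fun x => exists n, x = fst (I n))) as [a [Hub Hlub]].
  { exists (snd (I O)). intros x [n ->]. apply Hlr. }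
  { exists (fst (I O)), O. reflexivity. }
  exists a. intros n.
  destruct (Hstep n (I n) (HI n)) as (_ & _ & _ & HG). apply HG.
  change (step n (I n)) with (I (S n)). split.
  - apply Hub. exists (S n). reflexivity.
  - apply Hlub. intros x [m ->]. apply Hlr.
Qed.

Theorem lemma3p2 (F : pt -> Prop) :
  (forall p, F p -> inH p) ->
  (forall W : pt -> Prop, is_wedge_in_H W -> exists p, F p /\ W p) ->
  exists u, inSplus u /\ dense_in_R (fun y => exists x, F x /\ y = T u x).
Proof.
  intros H1 H2.
  assert (HF : Hyp F) by (split; assumption).
  destruct (exists_good F HF) as [a Ha].
  pose proof (good_dense F a Ha) as HD.
  destruct (unit_param a) as (HN0 & HN1 & HNm & HN2 & HS).
  set (N := sqrt (1 + a ^ 2)) in *.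
  exists (a / N, 1 / N). split; [exact HS|].
  intros y e He.
  destruct (HD (y * N) (e * N)) as (x & Fx & Hx); [nra|].
  exists (T (a / N, 1 / N) x). split; [exists x; split; auto|].
  unfold T; cbn [fst snd].
  replace (fst x * (1 / N) + snd x * - (a / N) - y) with ((fst x - a * snd x - y * N) / N) by (field; lra).
  unfold Rdiv. rewrite Rabs_mult, Rabs_inv, (Rabs_right N) by lra.
  apply Rmult_lt_reg_r with N; [lra|].
  rewrite Rmult_assoc, Rinv_l by lra. lra.
Qed.
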